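(* Assume the Bellman setting below, hypotheses (H1) and (H2), and that $A(P)$ is monotone for every $P\in\mathcal P$. Let $(U^\ell)_{\ell\ge 0}$ be any sequence produced by $\epsilon$-policy iteration on $\mathcal P$ (defined below). Then $(U^\ell)_\ell$ converges to a solution of the Bellman problem $\sup_{P\in\mathcal P}\{-A(P)U+y(P)\}=0$, and this solution is unique.
   Context: Bellman setting: Let $M\ge 0$ be an integer and $\mathcal P=\mathcal P_0\times\cdots\times\mathcal P_M$ a product of nonempty sets; write $P=(P_0,\dots,P_M)\in\mathcal P$. Let $A:\mathcal P\to\mathbb R^{(M+1)\times(M+1)}$ and $y:\mathcal P\to\mathbb R^{M+1}$ be row-decoupled: for each $i$, the $i$-th row of $A(P)$ and the $i$-th entry of $y(P)$ depend only on $P_i$. Inequalities between vectors (or matrices) are entrywise, and the supremum of a family of vectors is taken entrywise. The Bellman problem is to find $U\in\mathbb R^{M+1}$ with $\sup_{P\in\mathcal P}\{-A(P)U+y(P)\}=0$. Let $\vec e=(1,\dots,1)^\top\in\mathbb R^{M+1}$. A real square matrix is monotone if it is nonsingular and its inverse has nonnegative entries. (H1): the map $P\mapsto A(P)^{-1}$ is bounded on $\{P\in\mathcal P: A(P)\text{ nonsingular}\}$. (H2): $A$ and $y$ are bounded functions. $\epsilon$-policy iteration on a set $\mathcal Q=\mathcal Q_0\times\cdots\times\mathcal Q_M$ (with $\emptyset\ne\mathcal Q_i\subseteq\mathcal P_i$): pick any $U^0\in\mathbb R^{M+1}$ and any sequence $(\epsilon^\ell)_{\ell\ge1}$ of positive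 numbers with $\sum_\ell\epsilon^\ell<\infty$; for $\ell=1,2,\dots$ pick $P^\ell\in\mathcal Q$ with $-A(P^\ell)U^{\ell-1}+y(P^\ell)+\epsilon^\ell\vec e\ge\sup_{P\in\mathcal Q}\{-A(P)U^{\ell-1}+y(P)\}$ and let $U^\ell$ be the solution of $A(P^\ell)U^\ell=y(P^\ell)$. *)

(* Defs.v *)
From Stdlib Require Import Reals Lra.
Open Scope R_scope.

(* Indices are natural numbers 0..M; vectors are nat -> R, matrices nat -> nat -> R,
   only the entries with indices <= M matter. *)
Definition vec := nat -> R.
Definition mat := nat -> nat -> R.

Definition matvec (M : nat) (A : mat) (U : vec) : vec :=
  fun i => sum_f_R0 (fun j => A i j * U j) M.

Definition matmul (M : nat) (A B : mat) : mat :=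
  fun i k => sum_f_R0 (fun j => A i j * B j k) M.

Definition idm : mat := fun i j => if Nat.eqb i j then 1 else 0.

Definition is_inverse (M : nat) (A B : mat) : Prop :=
  forall i k, (i <= M)%nat -> (k <= M)%nat ->
    matmul M A B i k = idm i k /\ matmul M B A i k = idm i k.

Definition nonsingular (M : nat) (A : mat) : Prop := exists B, is_inverse M A B.

Definition monotone (M : nat) (A : mat) : Prop :=
  exists B, is_inverse M A B /\
    forall i j, (i <= M)%nat -> (j <= M)%nat -> 0 <= B i j.

(* A control P = (P_0,...,P_M) with P_i : T i; P \in 𝒫 iff P_i \in S i for all i <= M. *)
Definition in_set (M : nat) (T : nat -> Type) (S : forall i, T i -> Prop)
  (P : forall i, T i) : Prop := forall i, (i <= M)%nat -> S i (P i).

(* Row-decoupling is built in: row i of A(P) is a i (P i), entry i of y(P) is y i (P i). *)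
Definition Amat (T : nat -> Type) (a : forall i, T i -> nat -> R)
  (P : forall i, T i) : mat := fun i j => a i (P i) j.

Definition yvec (T : nat -> Type) (y : forall i, T i -> R)
  (P : forall i, T i) : vec := fun i => y i (P i).

Definition resid (M : nat) (T : nat -> Type) (a : forall i, T i -> nat -> R)
  (y : forall i, T i -> R) (P : forall i, T i) (U : vec) : vec :=
  fun i => - matvec M (Amat T a P) U i + yvec T y P i.

Definition bellman_sol (M : nat) (T : nat -> Type) (S : forall i, T i -> Prop)
  (a : forall i, T i -> nat -> R) (y : forall i, T i -> R) (U : vec) : Prop :=
  forall i, (i <= M)%nat ->
    is_lub (fun r => exists P, in_set M T S P /\ r = resid M T a y P U i) 0.

Definition H1 (M : nat) (T : nat -> Type) (S : forall i, T i -> Prop)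
  (a : forall i, T i -> nat -> R) : Prop :=
  exists C, forall P B, in_set M T S P -> is_inverse M (Amat T a P) B ->
    forall i j, (i <= M)%nat -> (j <= M)%nat -> Rabs (B i j) <= C.

Definition H2 (M : nat) (T : nat -> Type) (S : forall i, T i -> Prop)
  (a : forall i, T i -> nat -> R) (y : forall i, T i -> R) : Prop :=
  exists C, forall P, in_set M T S P ->
    forall i, (i <= M)%nat ->
      Rabs (y i (P i)) <= C /\ forall j, (j <= M)%nat -> Rabs (a i (P i) j) <= C.

(* (U, Pol, eps) is a run of eps-policy iteration on 𝒫:
   eps l > 0 for l >= 1, sum_{l>=1} eps l < oo, and for l >= 1
   Pol l \in 𝒫, -A(Pol l)U^{l-1} + y(Pol l) + eps l e >= sup_{P in 𝒫}{-A(P)U^{l-1}+y(P)}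
   (written out: it is an entrywise upper bound of every member of the family),
   and A(Pol l) U^l = y(Pol l). *)
Definition eps_policy_iteration (M : nat) (T : nat -> Type) (S : forall i, T i -> Prop)
  (a : forall i, T i -> nat -> R) (y : forall i, T i -> R)
  (U : nat -> vec) (Pol : nat -> forall i, T i) (eps : nat -> R) : Prop :=
  (forall l, (1 <= l)%nat -> 0 < eps l) /\
  (exists s, Un_cv (fun n => sum_f_R0 (fun k => eps (Datatypes.S k)) n) s) /\
  (forall l, (1 <= l)%nat ->
     in_set M T S (Pol l) /\
     (forall P, in_set M T S P -> forall i, (i <= M)%nat ->
        resid M T a y P (U (l - 1)%nat) i
          <= resid M T a y (Pol l) (U (l - 1)%nat) i + eps l) /\
     (forall i, (i <= M)%nat ->
        matvec M (Amat T a (Pol l)) (U l) i = yvec T y (Pol l) i)).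

(* Main.v *)
Require Import Defs.
From Stdlib Require Import Reals Lra Lia ClassicalEpsilon Classical Arith Compare_dec.
Open Scope R_scope.

Lemma sum_const c N : sum_f_R0 (fun _ => c) N = INR (S N) * c.
Proof. induction N. simpl; ring. rewrite tech5. rewrite IHN, (S_INR (S N)); ring. Qed.

Lemma sum_zero_gt f i N : (N < i)%nat -> sum_f_R0 (fun k => idm i k * f k) N = 0.
Proof.
  induction N; intro H; [simpl; unfold idm|rewrite tech5].
  - destruct (Nat.eqb_spec i 0); [lia|ring].
  - rewrite IHN by lia. unfold idm. destruct (Nat.eqb_spec i (S N)); [lia|ring].
Qed.

Lemma sum_idm f i N : (i <= N)%nat -> sum_f_R0 (fun k => idm i k * f k) N = f i.
Proof.
  induction N; intro H; [simpl|rewrite tech5].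
  - assert (i = 0%nat) by lia; subst; unfold idm; simpl; ring.
  - destruct (Nat.eq_dec i (S N)).
    + subst. rewrite sum_zero_gt by lia. unfold idm. rewrite Nat.eqb_refl. ring.
    + rewrite IHN by lia. unfold idm. destruct (Nat.eqb_spec i (S N)); [lia|ring].
Qed.

Lemma sum_exch (f : nat -> nat -> R) N N' :
  sum_f_R0 (fun j => sum_f_R0 (fun k => f j k) N) N' =
  sum_f_R0 (fun k => sum_f_R0 (fun j => f j k) N') N.
Proof.
  induction N'; [simpl|rewrite !tech5].
  - apply sum_eq; intros; reflexivity.
  - rewrite IHN', <- plus_sum. apply sum_eq; intros; reflexivity.
Qed.

Lemma matvec_inv M A B x i : is_inverse M A B -> (i <= M)%nat ->
  matvec M B (matvec M A x) i = x i.
Proof.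
  intros HI Hi. unfold matvec.
  transitivity (sum_f_R0 (fun j => sum_f_R0 (fun k => B i j * A j k * x k) M) M).
  { apply sum_eq; intros j _. rewrite scal_sum. apply sum_eq; intros; ring. }
  rewrite sum_exch.
  transitivity (sum_f_R0 (fun k => idm i k * x k) M); [|apply sum_idm; auto].
  apply sum_eq; intros k Hk. destruct (HI i k Hi Hk) as [_ H2].
  rewrite <- H2. unfold matmul. rewrite Rmult_comm, scal_sum. apply sum_eq; intros; ring.
Qed.

Lemma matvec_lin M A x z i :
  matvec M A (fun j => x j - z j) i = matvec M A x i - matvec M A z i.
Proof. unfold matvec. rewrite <- minus_sum. apply sum_eq; intros; ring. Qed.

Lemma matvec_opp M A x i : matvec M A (fun j => - x j) i = - matvec M A x i.
Proof.
  unfold matvec. replace (- sum_f_R0 (fun j => A i j * x j) M) with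
   ((-1) * sum_f_R0 (fun j => A i j * x j) M) by ring.
  rewrite scal_sum. apply sum_eq; intros; ring.
Qed.

Lemma lower_bd M A B C1 x d :
  is_inverse M A B -> (forall i j, (i <= M)%nat -> (j <= M)%nat -> 0 <= B i j) ->
  (forall i j, (i <= M)%nat -> (j <= M)%nat -> B i j <= C1) -> 0 <= d ->
  (forall j, (j <= M)%nat -> -d <= matvec M A x j) ->
  forall i, (i <= M)%nat -> -(d * (INR (S M) * C1)) <= x i.
Proof.
  intros HI Hp Hb Hd Hx i Hi. rewrite <- (matvec_inv M A B x i HI Hi).
  unfold matvec at 1.
  apply Rle_trans with (sum_f_R0 (fun j => B i j * (-d)) M).
  - rewrite <- scal_sum.
    assert (sum_f_R0 (fun j => B i j) M <= sum_f_R0 (fun _ => C1) M)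
      by (apply sum_Rle; intros; auto).
    rewrite sum_const in H.
    assert (d * sum_f_R0 (fun j => B i j) M <= d * (INR (S M) * C1))
      by (apply Rmult_le_compat_l; auto). change (sum_f_R0 (B i) M) with (sum_f_R0 (fun j => B i j) M). lra.
  - apply sum_Rle; intros. apply Rmult_le_compat_l; auto.
Qed.

Lemma upper_bd M A B C1 x d :
  is_inverse M A B -> (forall i j, (i <= M)%nat -> (j <= M)%nat -> 0 <= B i j) ->
  (forall i j, (i <= M)%nat -> (j <= M)%nat -> B i j <= C1) -> 0 <= d ->
  (forall j, (j <= M)%nat -> matvec M A x j <= d) ->
  forall i, (i <= M)%nat -> x i <= d * (INR (S M) * C1).
Proof.
  intros HI Hp Hb Hd Hx i Hi.
  assert (H := lower_bd M A B C1 (fun j => - x j) d HI Hp Hb Hd).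
  cut (-(d * (INR (S M) * C1)) <= - x i); [lra|]. apply H; auto.
  intros j Hj. rewrite matvec_opp. specialize (Hx j Hj). lra.
Qed.

Lemma abs_bd M A C x i : (forall j, (j <= M)%nat -> Rabs (A i j) <= C) ->
  Rabs (matvec M A x i) <= C * sum_f_R0 (fun j => Rabs (x j)) M.
Proof.
  intro H. unfold matvec. eapply Rle_trans; [apply sum_f_R0_triangle|].
  rewrite scal_sum. apply sum_Rle; intros j Hj. rewrite Rabs_mult, Rmult_comm.
  apply Rmult_le_compat_l; auto. apply Rabs_pos.
Qed.

Lemma cv_shift u l : Un_cv (fun n => u (S n)) l -> Un_cv u l.
Proof.
  intros H e He. destruct (H e He) as [N HN]. exists (S N). intros n Hn.
  destruct n; [lia|]. apply HN; lia.
Qed.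

Lemma cv_shift' u l : Un_cv u l -> Un_cv (fun n => u (S n)) l.
Proof. intros H e He. destruct (H e He) as [N HN]. exists N. intros n Hn. apply HN; lia. Qed.

Lemma cv_const c : Un_cv (fun _ => c) c.
Proof. intros e He. exists 0%nat. intros. unfold R_dist. rewrite Rminus_diag, Rabs_R0; auto. Qed.

Lemma cv_eq u l l' : Un_cv u l -> l = l' -> Un_cv u l'.
Proof. intros; subst; auto. Qed.

Lemma cv_ext u v l : (forall n, u n = v n) -> Un_cv u l -> Un_cv v l.
Proof. intros E H e He. destruct (H e He) as [N HN]. exists N. intros. rewrite <- E; auto. Qed.

Lemma cv_abs0 u l : Un_cv u l -> Un_cv (fun n => Rabs (u n - l)) 0.
Proof.
  intros H e He. destruct (H e He) as [N HN]. exists N. intros n Hn.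
  unfold R_dist. rewrite Rminus_0_r, Rabs_Rabsolu. apply HN; auto.
Qed.

Lemma cv_sum0 (f : nat -> nat -> R) N :
  (forall j, (j <= N)%nat -> Un_cv (fun n => f n j) 0) ->
  Un_cv (fun n => sum_f_R0 (f n) N) 0.
Proof.
  induction N; intro H.
  - simpl. apply H; auto.
  - simpl. eapply cv_eq. apply CV_plus. apply IHN; intros; apply H; lia.
    apply H; lia. ring.
Qed.

Lemma le_lim x g l : (forall n, x <= g n) -> Un_cv g l -> x <= l.
Proof.
  intros H Hc. destruct (Rle_or_lt x l); auto.
  destruct (Hc (x - l)) as [N HN]; [lra|]. specialize (HN N (le_n N)). specialize (H N).
  unfold R_dist in HN. apply Rabs_def2 in HN. lra.
Qed.

Lemma lim_le x g l : (forall n, g n <= x) -> Un_cv g l -> l <= x.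
Proof.
  intros H Hc. destruct (Rle_or_lt l x); auto.
  destruct (Hc (l - x)) as [N HN]; [lra|]. specialize (HN N (le_n N)). specialize (H N).
  unfold R_dist in HN. apply Rabs_def2 in HN. lra.
Qed.

Lemma abs_both x k : Rabs x <= k -> -k <= x /\ x <= k.
Proof. unfold Rabs; destruct Rcase_abs; lra. Qed.

Theorem theorem3p2 (M : nat) (T : nat -> Type) (S : forall i, T i -> Prop)
  (a : forall i, T i -> nat -> R) (y : forall i, T i -> R) :
  (forall i, (i <= M)%nat -> exists p, S i p) ->
  H1 M T S a -> H2 M T S a y ->
  (forall P, in_set M T S P -> monotone M (Amat T a P)) ->
  forall (U : nat -> vec) (Pol : nat -> forall i, T i) (eps : nat -> R),
  eps_policy_iteration M T S a y U Pol eps ->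
  exists Ustar : vec,
    (forall i, (i <= M)%nat -> Un_cv (fun l => U l i) (Ustar i)) /\
    bellman_sol M T S a y Ustar /\
    (forall V : vec, bellman_sol M T S a y V ->
       forall i, (i <= M)%nat -> V i = Ustar i).
Proof.
  intros Hne [C1 HC1] [C2 HC2] Hmon U Pol eps [Heps [[s Hs] Hit]].
  assert (Hin : forall l, (1 <= l)%nat -> in_set M T S (Pol l))
    by (intros l Hl; exact (proj1 (Hit l Hl))).
  assert (Hsup : forall n P, in_set M T S P -> forall i, (i <= M)%nat ->
     resid M T a y P (U (Datatypes.S n)) i <=
     resid M T a y (Pol (Datatypes.S (Datatypes.S n))) (U (Datatypes.S n)) i
       + eps (Datatypes.S (Datatypes.S n))).
  { intros n P HP i Hi. destruct (Hit (Datatypes.S (Datatypes.S n)) ltac:(lia)) as [_ [H _]].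
    exact (H P HP i Hi). }
  assert (Hsol : forall l, (1 <= l)%nat -> forall i, (i <= M)%nat ->
     matvec M (Amat T a (Pol l)) (U l) i = yvec T y (Pol l) i)
    by (intros l Hl; exact (proj2 (proj2 (Hit l Hl)))).
  set (P0 := Pol 1%nat).
  assert (HP0 : in_set M T S P0) by (apply Hin; lia).
  assert (HC1p : 0 <= C1).
  { destruct (Hmon P0 HP0) as [B [HB _]].
    eapply Rle_trans; [apply Rabs_pos|]. apply (HC1 P0 B HP0 HB 0%nat 0%nat); lia. }
  assert (HC2p : 0 <= C2).
  { eapply Rle_trans; [apply Rabs_pos|]. apply (proj1 (HC2 P0 HP0 0%nat ltac:(lia))). }
  set (c := INR (Datatypes.S M) * C1).
  assert (Hcp : 0 <= c) by (unfold c; apply Rmult_le_pos; auto; apply pos_INR).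
  assert (Hlow : forall P x d, in_set M T S P -> 0 <= d ->
    (forall j, (j <= M)%nat -> -d <= matvec M (Amat T a P) x j) ->
    forall i, (i <= M)%nat -> -(d * c) <= x i).
  { intros P x d HP Hd Hx. destruct (Hmon P HP) as [B [HB HBp]].
    eapply lower_bd; eauto. intros; eapply Rle_trans; [apply Rle_abs|eapply HC1; eauto]. }
  assert (Hupp : forall P x d, in_set M T S P -> 0 <= d ->
    (forall j, (j <= M)%nat -> matvec M (Amat T a P) x j <= d) ->
    forall i, (i <= M)%nat -> x i <= d * c).
  { intros P x d HP Hd Hx. destruct (Hmon P HP) as [B [HB HBp]].
    eapply upper_bd; eauto. intros; eapply Rle_trans; [apply Rle_abs|eapply HC1; eauto]. }
  assert (Hres : forall Q V W i, in_set M T S Q -> (i <= M)%nat ->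
    Rabs (resid M T a y Q V i - resid M T a y Q W i) <=
      C2 * sum_f_R0 (fun j => Rabs (V j - W j)) M).
  { intros Q V W i HQ Hi.
    replace (resid M T a y Q V i - resid M T a y Q W i) with
      (matvec M (Amat T a Q) (fun j => W j - V j) i)
      by (unfold resid; rewrite matvec_lin; ring).
    eapply Rle_trans; [apply abs_bd|].
    - intros j Hj. exact (proj2 (HC2 Q HQ i Hi) j Hj).
    - right; f_equal; apply sum_eq; intros; apply Rabs_minus_sym. }
  assert (Hzero : forall l, (1 <= l)%nat -> forall i, (i <= M)%nat ->
     resid M T a y (Pol l) (U l) i = 0).
  { intros l Hl i Hi. unfold resid. rewrite Hsol; auto. ring. }
  assert (HUb : forall n i, (i <= M)%nat -> U (Datatypes.S n) i <= C2 * c).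
  { intros n i Hi. apply (Hupp (Pol (Datatypes.S n))); auto. apply Hin; lia.
    intros j Hj. rewrite Hsol by (auto; lia). unfold yvec.
    apply (abs_both _ _ (proj1 (HC2 _ (Hin (Datatypes.S n) ltac:(lia)) j Hj))). }
  assert (Hstep : forall n j, (j <= M)%nat ->
    U (Datatypes.S n) j - U (Datatypes.S (Datatypes.S n)) j <= eps (Datatypes.S (Datatypes.S n)) * c).
  { intros n j Hj.
    apply (Hupp (Pol (Datatypes.S (Datatypes.S n))) (fun j => U (Datatypes.S n) j - U (Datatypes.S (Datatypes.S n)) j)); auto.
    apply Hin; lia. left; apply Heps; lia.
    intros k Hk. rewrite matvec_lin.
    pose proof (Hsup n (Pol (Datatypes.S n)) (Hin (Datatypes.S n) ltac:(lia)) k Hk) as H.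
    rewrite Hzero in H by (auto; lia). unfold resid in H.
    rewrite Hsol by (auto; lia). lra. }
  set (ps := fun n => sum_f_R0 (fun k => eps (Datatypes.S k)) n).
  assert (Hps_grow : Un_growing ps).
  { intro n. unfold ps. rewrite tech5. specialize (Heps (Datatypes.S (Datatypes.S n)) ltac:(lia)). lra. }
  assert (Hps_le : forall n, ps n <= s) by (apply growing_ineq; auto).
  assert (Hconv : forall i, exists L, (i <= M)%nat -> Un_cv (fun n => U (Datatypes.S n) i) L).
  { intro i. destruct (le_lt_dec i M) as [Hi|Hi]; [|exists 0; intro; lia].
    set (X := fun n => U (Datatypes.S n) i + c * ps n).
    assert (Hg : Un_growing X).
    { intro n. unfold X, ps. rewrite tech5. pose proof (Hstep n i Hi). nra. }
    assert (Hb : has_ub X).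
    { exists (C2 * c + c * s). intros r [k ->]. unfold X.
      pose proof (HUb k i Hi). pose proof (Hps_le k).
      assert (c * ps k <= c * s) by (apply Rmult_le_compat_l; auto). lra. }
    destruct (growing_cv X Hg Hb) as [L HL]. exists (L - c * s). intros _.
    apply cv_ext with (fun n => X n - c * ps n). { intro; unfold X; ring. }
    apply (CV_minus X (fun n => c * ps n)); auto.
    exact (CV_mult (fun _ => c) ps _ _ (cv_const c) Hs). }
  set (Ustar := fun i => proj1_sig (constructive_indefinite_description _ (Hconv i))).
  assert (HU : forall i, (i <= M)%nat -> Un_cv (fun n => U (Datatypes.S n) i) (Ustar i))
    by (intro i; exact (proj2_sig (constructive_indefinite_description _ (Hconv i)))).
  set (D := fun n => sum_f_R0 (fun j => Rabs (U (Datatypes.S n) j - Ustar j)) M).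
  assert (HD : Un_cv D 0).
  { exact (cv_sum0 (fun n j => Rabs (U (Datatypes.S n) j - Ustar j)) M
      (fun j Hj => cv_abs0 _ _ (HU j Hj))). }
  assert (Heps0 : Un_cv (fun n => eps (Datatypes.S (Datatypes.S n))) 0).
  { apply cv_ext with (fun n => ps (Datatypes.S n) - ps n).
    { intro n; unfold ps; rewrite tech5; ring. }
    apply cv_eq with (s - s); [|ring].
    apply (CV_minus (fun n => ps (Datatypes.S n)) ps); [apply cv_shift'|]; exact Hs. }
  assert (HB : bellman_sol M T S a y Ustar).
  { intros i Hi. split.
    - intros r [P [HP ->]].
      apply le_lim with (g := fun n => C2 * D n + C2 * (D n + D (Datatypes.S n)) + eps (Datatypes.S (Datatypes.S n))).
      + intro n.
        pose proof (abs_both _ _ (Hres P (U (Datatypes.S n)) Ustar i HP Hi)).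
        pose proof (Hsup n P HP i Hi).
        pose proof (abs_both _ _ (Hres (Pol (Datatypes.S (Datatypes.S n))) (U (Datatypes.S n)) Ustar i (Hin (Datatypes.S (Datatypes.S n)) ltac:(lia)) Hi)).
        pose proof (abs_both _ _ (Hres (Pol (Datatypes.S (Datatypes.S n))) (U (Datatypes.S (Datatypes.S n))) Ustar i (Hin (Datatypes.S (Datatypes.S n)) ltac:(lia)) Hi)).
        pose proof (Hzero (Datatypes.S (Datatypes.S n)) ltac:(lia) i Hi).
        unfold D. lra.
      + apply cv_eq with (C2 * 0 + C2 * (0 + 0) + 0); [|ring].
        apply (CV_plus (fun n => C2 * D n + C2 * (D n + D (Datatypes.S n))) (fun n => eps (Datatypes.S (Datatypes.S n)))); [|exact Heps0].
        apply (CV_plus (fun n => C2 * D n) (fun n => C2 * (D n + D (Datatypes.S n)))).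
        * exact (CV_mult (fun _ => C2) D _ _ (cv_const C2) HD).
        * apply (CV_mult (fun _ => C2) (fun n => D n + D (Datatypes.S n))); [apply cv_const|].
          apply (CV_plus D (fun n => D (Datatypes.S n))); [exact HD|exact (cv_shift' D 0 HD)].
    - intros b Hb.
      apply lim_le with (g := fun n => (- C2) * D n).
      + intro n.
        assert (Hin1 : in_set M T S (Pol (Datatypes.S n))) by (apply Hin; lia).
        pose proof (Hb (resid M T a y (Pol (Datatypes.S n)) Ustar i) (ex_intro _ _ (conj Hin1 eq_refl))).
        pose proof (abs_both _ _ (Hres (Pol (Datatypes.S n)) (U (Datatypes.S n)) Ustar i Hin1 Hi)).
        pose proof (Hzero (Datatypes.S n) ltac:(lia) i Hi).
        unfold D. lra.
      + apply cv_eq with (-C2 * 0); [|ring].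
        exact (CV_mult (fun _ => -C2) D _ _ (cv_const (-C2)) HD). }
  assert (Hge : forall V W, bellman_sol M T S a y V -> bellman_sol M T S a y W ->
     forall i, (i <= M)%nat -> W i <= V i).
  { intros V W HV HW i Hi. apply Rnot_lt_le. intro Hlt.
    set (w := W i - V i).
    set (de := w / (c + 1)).
    assert (Hde : 0 < de) by (unfold de, w; apply Rdiv_lt_0_compat; lra).
    assert (Hde2 : de * c + de = w) by (unfold de; field; lra).
    assert (Hch : forall k, exists Q : forall i, T i, in_set M T S Q /\
              ((k <= M)%nat -> - de < resid M T a y Q W k)).
    { intro k. destruct (le_lt_dec k M) as [Hk|Hk].
      - destruct (HW k Hk) as [Hub Hlub]. apply NNPP; intro Hn.
        assert (0 <= - de); [|lra]. apply Hlub. intros r [Q [HQ ->]].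
        apply Rnot_lt_le; intro. apply Hn. exists Q; split; auto.
      - exists P0; split; auto; intro; lia. }
    set (Qf := fun k => proj1_sig (constructive_indefinite_description _ (Hch k))).
    set (P := fun k => Qf k k).
    assert (HP : in_set M T S P).
    { intros k Hk. exact (proj1 (proj2_sig (constructive_indefinite_description _ (Hch k))) k Hk). }
    assert (HPW : forall k, (k <= M)%nat -> - de < resid M T a y P W k).
    { intros k Hk.
      change (resid M T a y P W k) with (resid M T a y (Qf k) W k).
      exact (proj2 (proj2_sig (constructive_indefinite_description _ (Hch k))) Hk). }
    assert (Hd := Hlow P (fun j => V j - W j) de HP ltac:(lra)).
    assert (- (de * c) <= V i - W i); [|unfold w in Hde2; lra].
    apply Hd; auto. intros j Hj. rewrite matvec_lin.
    destruct (HV j Hj) as [HubV _].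
    pose proof (HubV (resid M T a y P V j) (ex_intro _ _ (conj HP eq_refl))).
    pose proof (HPW j Hj). unfold resid in *. lra. }
  exists Ustar. split; [|split; [exact HB|]].
  - intros i Hi. apply cv_shift. apply HU; auto.
  - intros V HV i Hi. apply Rle_antisym; apply Hge; auto.
Qed.
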